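(* Consider binary classification on $\mathcal{X}=\{x\in\mathbb{R}^2:\|x\|\le1\}$ with $x$ uniformly distributed on $\mathcal{X}$, linear hypotheses $h_w(x)=\mathrm{sgn}(x^{\top}w)$, $w\in\mathbb{R}^2$, identified with their parameters and with metric $d_{\mathcal{H}}(h_w,h_{w'})=\|w-w'\|_2$, and let $g=h_{(1,0)}$. Assume the sample $x_0$ forms an angle $\theta_0\in(0,\pi/2)$ with the $x$-axis, and consider $\varepsilon\in(0,1)$ with $\theta_0+\pi\varepsilon<\pi/2$. Let $\mathcal{H}_N$ consist of the hypotheses with $N$ i.i.d. random parameters drawn from $\mathcal{N}((1,0),\sigma^2 I_2)$ for some fixed $\sigma^2>0$, and let $B>0$ be a fixed constant. Then there exist $\alpha(N,\varepsilon)=\mathcal{O}(1/\sqrt{N})$ and $\beta(N)=\mathcal{O}(e^{-\sqrt{N}})$ such that $$\mathbb{P}\Big[\inf_{\substack{h^*\in\mathcal{H}^{g,x_0}\\ \rho(h^*,g)-L(g,x_0)\le\varepsilon}}\ \min_{h\in\mathcal{H}_N^{g,x_0}} d_{\mathcal{H}}(h^*,h)\le\tfrac1B\alpha(N,\varepsilon)\Big]\ge1-\beta(N).$$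
   Context: $\rho(h_1,h_2)=\mathbb{P}_X[h_1(X)\neq h_2(X)]$ with $X$ uniform on $\mathcal{X}$; $\mathcal{H}^{g,x_0}=\{h: h(x_0)\neq g(x_0)\}$ over all linear hypotheses; $\mathcal{H}_N^{g,x_0}=\mathcal{H}_N\cap\mathcal{H}^{g,x_0}$; $L(g,x_0)=\inf_{h\in\mathcal{H}^{g,x_0}}\rho(h,g)$. The probability is over the random draw of $\mathcal{H}_N$. *)

(* Defs.v *)
From HB Require Import structures.
From mathcomp Require Import all_boot all_order all_algebra.
From mathcomp Require Import all_classical all_reals all_analysis.
Set Implicit Arguments. Unset Strict Implicit. Unset Printing Implicit Defensive.
Import Order.TTheory GRing.Theory Num.Theory.
Local Open Scope classical_set_scope.
Local Open Scope ring_scope.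

Section defs.
Context {R : realType}.

Definition dot2 (x w : R * R) : R := x.1 * w.1 + x.2 * w.2.
Definition norm2 (w : R * R) : R := Num.sqrt (w.1 ^+ 2 + w.2 ^+ 2).

Definition disk : set (R * R) := [set x | norm2 x <= 1].

Definition hyp (w : R * R) : R * R -> R := fun x => Num.sg (dot2 x w).

Definition g_target : R * R -> R := hyp (1, 0).

Definition leb2 : set (R * R) -> \bar R :=
  (@lebesgue_measure R \x @lebesgue_measure R)%E.

(* rho(h1,h2) = P_X[h1 X <> h2 X], X uniform on the unit disk *)
Definition rho (h1 h2 : R * R -> R) : R :=
  fine (leb2 (disk `&` [set x | h1 x != h2 x])) / fine (leb2 disk).

Definition Hgx0 (x0 : R * R) : set (R * R) :=
  [set w | hyp w x0 != g_target x0].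

Definition Lgx0 (x0 : R * R) : \bar R :=
  ereal_inf [set (rho (hyp w) g_target)%:E | w in Hgx0 x0].

Definition gauss2 (m : R * R) (s : R) : set (R * R) -> \bar R :=
  (normal_prob m.1 s \x normal_prob m.2 s)%E.

Definition iid_law d (T : measurableType d) (P : probability T R) (N : nat)
  (W : 'I_N -> T -> R * R) (mu : set (R * R) -> \bar R) : Prop :=
  (forall i, measurable_fun setT (W i)) /\
  (forall i (A : set (R * R)), measurable A -> P (W i @^-1` A) = mu A) /\
  (forall A : 'I_N -> set (R * R), (forall i, measurable (A i)) ->
     P (\bigcap_(i in [set: 'I_N]) (W i @^-1` A i)) =
     (\prod_(i < N) P (W i @^-1` A i))%E).

(* min_{h in H_N^{g,x0}} d_H(h*, h) for sample H_N = {h_{w_i}} (+oo if empty) *)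
Definition min_dist (x0 : R * R) N (ws : 'I_N -> R * R) (wstar : R * R) : \bar R :=
  (\big[mine/+oo]_(i < N | ws i \in Hgx0 x0) (norm2 (wstar - ws i))%:E)%E.

Definition inf_min_dist (x0 : R * R) (eps : R) N (ws : 'I_N -> R * R) : \bar R :=
  ereal_inf [set min_dist x0 ws wstar | wstar in
     [set w | w \in Hgx0 x0 /\ ((rho (hyp w) g_target)%:E - Lgx0 x0 <= eps%:E)%E]].

End defs.

(* Main.v *)
Require Import Defs.
From HB Require Import structures.
From mathcomp Require Import all_boot all_order all_algebra.
From mathcomp Require Import all_classical all_reals all_analysis.
From mathcomp Require Import ring lra measurable_realfun.
Import Order.TTheory GRing.Theory Num.Theory.
Local Open Scope classical_set_scope.
Local Open Scope ring_scope.



Section geo.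
Context {R : realType}.
Implicit Types (v w : R * R) (t y : R).

Lemma sg_eqE (a b : R) :
  (Num.sg a == Num.sg b) = ((a < 0) == (b < 0)) && ((0 < a) == (0 < b)).
Proof.
case: (ltrgtP a 0) => ha; case: (ltrgtP b 0) => hb;
  rewrite ?(ltr0_sg ha) ?(gtr0_sg ha) ?(ltr0_sg hb) ?(gtr0_sg hb) ?ha ?hb ?sgr0 //=.
all: rewrite ?ltxx ?(lt_gtF ha) ?(lt_gtF hb) //=.
all: rewrite ?eqxx //=; apply/negbTE/eqP; lra.
Qed.

Lemma norm2_le1 (x : R * R) : (norm2 x <= 1) = (x.1 ^+ 2 + x.2 ^+ 2 <= 1).
Proof. by rewrite /norm2 -{1}sqrtr1 ler_sqrt. Qed.

Lemma measurable_beq d (T : measurableType d) (D : set T) (f g : T -> bool) :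
  measurable_fun D f -> measurable_fun D g -> measurable_fun D (fun x => f x == g x).
Proof.
move=> mf mg.
have -> : (fun x => f x == g x) = (fun x => (f x && g x) || (~~ f x && ~~ g x)).
  by apply/funext => x; case: (f x); case: (g x).
apply: measurable_or; apply: measurable_and => //; exact: measurable_neg.
Qed.

Lemma measurable_dot2 v : measurable_fun [set: R * R] (fun x => dot2 x v).
Proof.
rewrite /dot2; apply: measurable_funD; apply: measurable_funM => //;
  by [exact: measurable_fst|exact: measurable_snd|exact: measurable_cst].
Qed.

Definition Dset v : set (R * R) := disk `&` [set x | hyp v x != g_target x].

Lemma measurable_Dset v : measurable (Dset v).
Proof.
pose b := fun x : R * R => (x.1 ^+ 2 + x.2 ^+ 2 <= 1) && ~~ (((dot2 x v < 0) == (dot2 x (1,0) < 0)) && ((0 < dot2 x v) == (0 < dot2 x (1,0)))).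
have -> : Dset v = b @^-1` [set true].
  apply/seteqP; split => x /=; rewrite /b /Dset /disk /hyp /g_target /= norm2_le1 -sg_eqE.
    by move=> [-> ->].
  by move/andP => [-> ->].
have mb : measurable_fun [set: R * R] b.
  apply: measurable_and.
    apply: measurable_fun_ler; last exact: measurable_cst.
    apply: measurable_funD; apply: measurable_funX.
      exact: measurable_fst.
    exact: measurable_snd.
  apply: measurable_neg; apply: measurable_and; apply: measurable_beq;
    apply: measurable_fun_ltr; try exact: measurable_dot2; exact: measurable_cst.
by rewrite -[X in measurable X]setTI; exact: mb.
Qed.

Lemma inF v t y : xsection (Dset v) t y <->
  (t ^+ 2 + y ^+ 2 <= 1 /\ Num.sg (t * v.1 + y * v.2) != Num.sg t).
Proof.
rewrite /xsection /= inE /Dset /disk /hyp /g_target /dot2 /= norm2_le1 /=.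
by rewrite /hyp /dot2 /= mulr1 mulr0 addr0.
Qed.

Lemma sg_neq (a t : R) : t != 0 -> (Num.sg a != Num.sg t) = (t * a <= 0).
Proof.
move=> t0; case: (ltrgtP t 0) => ht; last by rewrite ht eqxx in t0.
all: rewrite ?(ltr0_sg ht) ?(gtr0_sg ht); case: (ltrgtP a 0) => ha;
  rewrite ?(ltr0_sg ha) ?(gtr0_sg ha) ?ha ?sgr0 ?mulr0 ?lexx ?eqxx //=.
all: try by (apply/eqP; lra).
all: apply/idP/idP => H; [ try (by rewrite eqxx in H); nra | apply/negP => /eqP E; try lra; nra ].
Qed.

Lemma disk_fiber t y : t ^+ 2 <= 1 ->
  (t ^+ 2 + y ^+ 2 <= 1) = (`|y| <= Num.sqrt (1 - t ^+ 2)).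
Proof.
move=> t1; rewrite -sqrtr_sqr ler_sqrt; last by rewrite subr_ge0.
by rewrite lerBrDl.
Qed.

Lemma leb_sym (h : R) :
  lebesgue_measure (`[0, h] : set R) = lebesgue_measure (`[- h, 0] : set R).
Proof.
rewrite !lebesgue_measure_itv /= !lte_fin oppr_lt0.
by case: ifP => _ //; rewrite -EFinB subr0 -EFinB sub0r opprK.
Qed.

Lemma mxs w t : measurable (xsection (Dset w) t).
Proof. by apply: measurable_xsection; exact: measurable_Dset. Qed.

Lemma fiber_le_u k v t : 0 <= k -> v.1 + k * v.2 <= 0 -> t != 0 ->
  (lebesgue_measure (xsection (Dset (k, -1)%R) t) <=
   lebesgue_measure (xsection (Dset v) t))%E.
Proof.
move=> k0 hv t0.
have [v2lt|v2ge] := ltP v.2 0.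
  apply: le_measure; rewrite ?inE; try exact: mxs.
  move=> y /inF [h1 h2]; apply/inF; split => //.
  rewrite sg_neq // in h2; rewrite sg_neq //; rewrite /= in h2.
  have h3 : 0 <= t ^+ 2 * - (v.1 + k * v.2) by apply: mulr_ge0; [exact: sqr_ge0| lra].
  have h4 : 0 <= - v.2 * (- (t * (t * k + y * -1))) by apply: mulr_ge0; lra.
  lra.
have [t1|t1] := ltP 1 (t ^+ 2).
  rewrite (_ : xsection _ t = set0) ?measure0 ?measure_ge0 //.
  apply/seteqP; split => [y /inF [h _] /=|//]; have := sqr_ge0 y; lra.
set h := Num.sqrt (1 - t ^+ 2).
have [tpos|tneg] := ltP 0 t.
- apply: (@le_trans _ _ (lebesgue_measure (`[0, h] : set R))).
    apply: le_measure; rewrite ?inE; try exact: mxs; try exact: measurable_itv.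
    move=> y /inF [h1 h2]; rewrite sg_neq // in h2; rewrite /= in h2.
    rewrite disk_fiber // in h1.
    have hy : 0 <= y by nra.
    by rewrite /= in_itv /= hy /= -(ger0_norm hy).
  rewrite leb_sym; apply: le_measure; rewrite ?inE; try exact: mxs; try exact: measurable_itv.
  move=> y; rewrite /= in_itv /= => /andP [hy1 hy2]; apply/inF; split.
    by rewrite disk_fiber // ler0_norm // lerNl.
  rewrite sg_neq //.
  have h3 : 0 <= t ^+ 2 * - v.1 by apply: mulr_ge0; [exact: sqr_ge0| nra].
  have h4 : 0 <= t * (- y * v.2) by apply: mulr_ge0; [lra|apply: mulr_ge0; lra].
  lra.
- have tlt : t < 0 by rewrite lt_neqAle t0 tneg.
  apply: (@le_trans _ _ (lebesgue_measure (`[- h, 0] : set R))).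
    apply: le_measure; rewrite ?inE; try exact: mxs; try exact: measurable_itv.
    move=> y /inF [h1 h2]; rewrite sg_neq // in h2; rewrite /= in h2.
    rewrite disk_fiber // in h1.
    have hy : y <= 0 by nra.
    by rewrite /= in_itv /= hy andbT lerNl -(ler0_norm hy).
  rewrite -leb_sym; apply: le_measure; rewrite ?inE; try exact: mxs; try exact: measurable_itv.
  move=> y; rewrite /= in_itv /= => /andP [hy1 hy2]; apply/inF; split.
    by rewrite disk_fiber // ger0_norm.
  rewrite sg_neq //.
  have h3 : 0 <= t ^+ 2 * - v.1 by apply: mulr_ge0; [exact: sqr_ge0| nra].
  have h4 : 0 <= - t * (y * v.2) by apply: mulr_ge0; [lra|apply: mulr_ge0; lra].
  lra.
Qed.

Lemma leb2_u_le k v : 0 <= k -> v.1 + k * v.2 <= 0 ->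
  (leb2 (Dset (k, -1)%R) <= leb2 (Dset v))%E.
Proof.
move=> k0 hv; rewrite /leb2 /product_measure1 /=.
apply: ae_ge0_le_integral => //.
- by apply: measurable_fun_xsection; exact: measurable_Dset.
- by apply: measurable_fun_xsection; exact: measurable_Dset.
exists [set 0%R]; split; first exact: measurable_set1.
  exact: lebesgue_measure_set1.
move=> t /= H; have [->//|t0] := eqVneq t 0%R; exfalso; apply: H => _.
exact: fiber_le_u.
Qed.

Lemma fiber_w k w t (D : R) : 0 <= k -> 0 <= D -> w.2 <= -1 ->
  - (k * w.2) - w.1 <= D ->
  (lebesgue_measure (xsection (Dset w) t) <=
   lebesgue_measure (xsection (Dset (k, -1)%R) t) +
     ((D *+ 2) * \1_(`[-1, 1] : set R) t)%:E)%E.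
Proof.
move=> k0 D0 w2 hD.
have ind0 s : (0 <= ((D *+ 2) * \1_(`[-1, 1] : set R) s)%:E)%E.
  by rewrite lee_fin mulr_ge0 ?mulrn_wge0 // indicE; case: (_ \in _).
have [->|t0] := eqVneq t 0.
  have H := leeDl (lebesgue_measure (xsection (Dset (k, -1)%R) 0)) (ind0 0).
  apply: le_trans H.
  apply: le_measure; rewrite ?inE; try exact: mxs.
  move=> y /inF [h1 h2]; apply/inF; split => //.
  rewrite sgr0 !mul0r !add0r in h2 *.
  rewrite sgr_eq0 in h2; rewrite sgr_eq0 mulf_eq0 negb_or; apply/andP; split.
    by move: h2; rewrite mulf_eq0 negb_or => /andP [].
  by rewrite oppr_eq0 oner_eq0.
have [t1|t1] := ltP 1 (t ^+ 2).
  rewrite (_ : xsection (Dset w) t = set0) ?measure0; last first.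
    apply/seteqP; split => [y /inF [h _] /=|//]; have := sqr_ge0 y; lra.
  by apply: adde_ge0 => //; exact: measure_ge0.
have tin : \1_(`[-1, 1] : set R) t = 1 :> R.
  rewrite indicE mem_set //= in_itv /=; apply/andP; split; nra.
rewrite tin mulr1.
set I := (`[t * k - D, t * k + D]%classic : set R).
apply: (@le_trans _ _ (lebesgue_measure (xsection (Dset (k, -1)%R) t `|` I))).
  apply: le_measure; rewrite ?inE; try exact: mxs.
    by apply: measurableU; [exact: mxs| exact: measurable_itv].
  move=> y Hy; have := Hy; move=> /inF [h1 h2].
  have [hu|hu] := leP (t * (t * k + y * -1)) 0.
    left; apply/inF; split => //; rewrite sg_neq //.
  right; rewrite sg_neq // in h2; rewrite /= in h2.
  set z := t * k - y.
  have hz : 0 < t * z by rewrite /z; lra.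
  have h3 : t * z <= t * z * (- w.2) by nra.
  have h4 : t * z * (- w.2) <= t ^+ 2 * D.
    have h5 : 0 <= t ^+ 2 * (D - (- (k * w.2) - w.1)) by apply: mulr_ge0; [exact: sqr_ge0|lra].
    rewrite /z; nra.
  rewrite /I /= in_itv /=.
  have [tp|tn] := ltP 0 t.
    have : z <= t * D by nra.
    have : 0 < z by nra.
    have : t * D <= D by nra.
    rewrite /z => *; apply/andP; split; lra.
  have tn' : t < 0 by rewrite lt_neqAle t0 tn.
  have : t * D <= z by nra.
  have : z < 0 by nra.
  have : - D <= t * D by nra.
  rewrite /z => *; apply/andP; split; lra.
apply: le_trans; first apply: measureU2; try exact: mxs; try exact: measurable_itv.
apply: leeD2l; change (lebesgue_measure I <= (D *+ 2)%:E)%E.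
rewrite /I lebesgue_measure_itv /= lte_fin.
case: ifP => _; last by rewrite lee_fin mulrn_wge0.
by rewrite -EFinB lee_fin; lra.
Qed.

Lemma leb2_w_le k w (D : R) : 0 <= k -> 0 <= D -> w.2 <= -1 ->
  - (k * w.2) - w.1 <= D ->
  (leb2 (Dset w) <= leb2 (Dset (k, -1)%R) + (D *+ 4)%:E)%E.
Proof.
move=> k0 D0 w2 hD; rewrite /leb2 /product_measure1 /=.
have mA : measurable (`[-1, 1]%classic : set R) by exact: measurable_itv.
have mfu : measurable_fun [set: R] (fun t => lebesgue_measure (xsection (Dset (k, -1)%R) t)).
  by apply: measurable_fun_xsection; exact: measurable_Dset.
have mind : measurable_fun [set: R] (fun t => ((D *+ 2) * \1_(`[-1, 1] : set R) t)%:E).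
  apply/measurable_EFinP; apply: measurable_funM; first exact: measurable_cst.
  exact: measurable_indic.
have ind0 s : (0 <= ((D *+ 2) * \1_(`[-1, 1] : set R) s)%:E)%E.
  by rewrite lee_fin mulr_ge0 ?mulrn_wge0 // indicE; case: (_ \in _).
apply: (@le_trans _ _ (\int[lebesgue_measure]_t
    (lebesgue_measure (xsection (Dset (k, -1)%R) t) +
       ((D *+ 2) * \1_(`[-1, 1] : set R) t)%:E))%E).
  apply: ge0_le_integral => //.
  - by apply: measurable_fun_xsection; exact: measurable_Dset.
  - exact: emeasurable_funD.
  - by move=> t _; exact: fiber_w.
rewrite ge0_integralD //.
apply: leeD2l.
under eq_integral do rewrite EFinM.
rewrite ge0_integralZl_EFin //; last by rewrite mulrn_wge0.
rewrite integral_indic // setIT.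
change ((D *+ 2)%:E * lebesgue_measure (`[(-1)%R, 1%R]%classic : set R) <= (D *+ 4)%:E)%E.
rewrite lebesgue_measure_itv /= lte_fin.
rewrite ifT; last lra.
rewrite -EFinB -EFinM lee_fin.
have -> : (1 - -1 : R) = 2%:R by rewrite opprK.
by rewrite mulr_natr -mulrnA.
apply/measurable_EFinP; exact: (@measurable_indic _ R R _ (`[(-1)%R, 1%R]%classic : set R)).
Qed.

End geo.



Section geo2.
Context {R : realType}.

Lemma measurable_disk : measurable (disk : set (R * R)).
Proof.
have -> : (disk : set (R * R)) = (fun x : R * R => x.1 ^+ 2 + x.2 ^+ 2 <= 1) @^-1` [set true].
  by apply/seteqP; split => x /=; rewrite /disk /= norm2_le1.
have mb : measurable_fun [set: R * R] (fun x : R * R => x.1 ^+ 2 + x.2 ^+ 2 <= 1).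
  apply: measurable_fun_ler; last exact: measurable_cst.
  apply: measurable_funD; apply: measurable_funX.
    exact: measurable_fst.
  exact: measurable_snd.
by rewrite -[X in measurable X]setTI; exact: mb.
Qed.

Lemma leb2_sq (a : R) : 0 <= a ->
  leb2 ((`[- a, a]%classic : set R) `*` (`[- a, a]%classic : set R)) = ((a *+ 2) ^+ 2)%:E.
Proof.
move=> a0; rewrite /leb2 product_measure1E; try exact: measurable_itv.
have L : lebesgue_measure (`[- a, a]%classic : set R) = (a *+ 2)%:E.
  rewrite lebesgue_measure_itv /=.
  have [a0'|a0'] := ltP (- a) a.
    by rewrite lte_fin a0' -EFinB opprK -mulr2n.
  have -> : a = 0 by lra.
  by rewrite oppr0 ?lte_fin ltxx mul0rn.
change (lebesgue_measure (`[(- a)%R, a]%classic : set R) * lebesgue_measure (`[(- a)%R, a]%classic : set R) = ((a *+ 2) ^+ 2)%:E)%E.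
by rewrite L -EFinM expr2.
Qed.

Lemma disk_sub : (disk : set (R * R)) `<=` (`[-1, 1]%classic : set R) `*` (`[-1, 1]%classic : set R).
Proof.
move=> [x y]; rewrite /disk /= norm2_le1 /= => h.
have := sqr_ge0 x; have := sqr_ge0 y => hx hy.
have h1 : -1 <= x by nra.
have h2 : x <= 1 by nra.
have h3 : -1 <= y by nra.
have h4 : y <= 1 by nra.
by rewrite !in_itv /= h1 h2 h3 h4.
Qed.

Lemma disk_sup : (`[- 2^-1, 2^-1]%classic : set R) `*` (`[- 2^-1, 2^-1]%classic : set R) `<=` (disk : set (R * R)).
Proof.
move=> [x y]; rewrite /disk /= norm2_le1 /= !in_itv /= => -[/andP [h1 h2] /andP [h3 h4]].
nra.
Qed.

Lemma leb2_disk_ge1 : (1 <= leb2 (disk : set (R * R)))%E.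
Proof.
have E := leb2_sq (2^-1 : R); rewrite invr_ge0 ler0n in E; move: (E isT) => {}E.
rewrite (_ : ((2^-1 : R) *+ 2) ^+ 2 = 1) in E; last first.
  by rewrite mulr2n (_ : 2^-1 + 2^-1 = 1 :> R) ?expr1n //; lra.
rewrite -E /leb2; apply: le_measure; rewrite ?inE.
- by apply: measurableX; exact: measurable_itv.
- exact: measurable_disk.
- exact: disk_sup.
Qed.

Lemma leb2_sub_fin (A : set (R * R)) : measurable A -> A `<=` disk -> leb2 A \is a fin_num.
Proof.
move=> mA Ad; rewrite ge0_fin_numE; last exact: measure_ge0.
apply: (@le_lt_trans _ _ (leb2 ((`[-1, 1]%classic : set R) `*` (`[-1, 1]%classic : set R)))).
  rewrite /leb2; apply: le_measure; rewrite ?inE //.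
    by apply: measurableX; exact: measurable_itv.
  exact: subset_trans Ad disk_sub.
by rewrite (leb2_sq (1 : R)) ?ltry.
Qed.

Lemma normal_itv_gt0 (m s c d : R) : s != 0 -> c < d ->
  (0 < normal_prob m s (`[c, d]%classic : set R))%E.
Proof.
move=> s0 cd.
set B := `|c - m| + `|d - m|.
set K := s ^+ 2 *+ 2.
have K0 : 0 < K by rewrite /K pmulrn_lgt0 // exprn_even_gt0.
set k := normal_peak s * expR (- B ^+ 2 / K).
have k0 : 0 < k by rewrite mulr_gt0 ?expR_gt0 ?normal_peak_gt0.
have mI : measurable (`[c, d]%classic : set R) by exact: measurable_itv.
apply: (@lt_le_trans _ _ (k%:E * lebesgue_measure (`[c, d]%classic : set R)))%E.
  rewrite lebesgue_measure_itv /= lte_fin cd -EFinB -EFinM lte_fin.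
  by rewrite mulr_gt0 // subr_gt0.
rewrite /normal_prob -integral_cst //.
apply: ge0_le_integral => //.
- by move=> x _; rewrite /= lee_fin ltW.
- by apply/measurable_EFinP; apply: measurable_funTS; exact: measurable_normal_pdf.
move=> x; rewrite /= in_itv /= => /andP [cx xd].
rewrite lee_fin /normal_pdf (negbTE s0) /k.
apply: ler_wpM2l; first exact: normal_peak_ge0.
rewrite /normal_fun ler_expR -/K !mulNr lerN2.
apply: ler_wpM2r; first by rewrite invr_ge0 ltW.
have h1 : x - m <= B.
  have := ler_norm (d - m); have := normr_ge0 (c - m); rewrite /B; lra.
have h2 : - (x - m) <= B.
  have := ler_norm (- (c - m)); rewrite normrN; have := normr_ge0 (d - m); rewrite /B; lra.
nra.
Qed.

End geo2.



Lemma sg_neq1 {R : realType} (a : R) : (Num.sg a != 1) = (a <= 0).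
Proof.
case: (ltrgtP a 0) => ha; rewrite ?(ltr0_sg ha) ?(gtr0_sg ha) ?ha ?sgr0;
  rewrite ?lexx ?eqxx //; try by apply/eqP => H; lra.
Qed.

Lemma prod_const_ord {R : realType} n (x : R) : \prod_(i < n) x = x ^+ n.
Proof. by rewrite big_const_ord; elim: n => //= n ->; rewrite exprS. Qed.

Lemma geo_main (R : realType) (x0 : R * R) (eps : R) :
  0 < x0.1 -> 0 <= x0.2 -> 0 < eps ->
  let k := x0.2 / x0.1 in
  let eta := eps / (4 * (k + 1)) in
  forall w, ((`[k - eta, k]%classic : set R) `*` (`[-1 - eta, -1]%classic : set R)) w ->
  w \in Hgx0 x0 /\ ((rho (hyp w) g_target)%:E - Lgx0 x0 <= eps%:E)%E.
Proof.
move=> a0 b0 e0 k eta w [/= w1 w2].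
rewrite !in_itv /= in w1 w2; case/andP: w1 => w11 w12; case/andP: w2 => w21 w22.
have k0 : 0 <= k by rewrite /k divr_ge0 // ltW.
have eta0 : 0 < eta by rewrite /eta divr_gt0 // mulr_gt0 //; lra.
have Hg v : (Hgx0 x0 v) <-> (v.1 + k * v.2 <= 0).
  rewrite /Hgx0 /= /g_target /hyp /dot2 /= mulr1 mulr0 addr0 (gtr0_sg a0) sg_neq1.
  have -> : x0.1 * v.1 + x0.2 * v.2 = x0.1 * (v.1 + k * v.2).
    by rewrite /k mulrDr mulrA mulrCA divff ?mulr1 // gt_eqF.
  by rewrite pmulr_rle0.
have fd := leb2_disk_ge1 (R := R).
have fdfin : leb2 (disk : set (R * R)) \is a fin_num.
  by apply: leb2_sub_fin => //; exact: measurable_disk.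
have Dfin v : leb2 (Dset v) \is a fin_num.
  by apply: leb2_sub_fin; [exact: measurable_Dset| move=> x []].
have fd1 : 1 <= fine (leb2 (disk : set (R * R))).
  by rewrite -lee_fin fineK.
have rhoE v : rho (hyp v) g_target = fine (leb2 (Dset v)) / fine (leb2 (disk : set (R * R))) by [].
have rho_u v : Hgx0 x0 v -> rho (hyp (k, -1)) g_target <= rho (hyp v) g_target.
  move=> /Hg hv; rewrite !rhoE; apply: ler_wpM2r; first by rewrite invr_ge0; lra.
  by apply: fine_le; [exact: Dfin|exact: Dfin|exact: leb2_u_le].
have L_ge : ((rho (hyp (k, -1)) g_target)%:E <= Lgx0 x0)%E.
  apply/ereal_infP => _ [v hv <-]; rewrite lee_fin; exact: rho_u.
split.
  rewrite inE; apply/Hg; nra.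
apply: (@le_trans _ _ ((rho (hyp w) g_target)%:E - (rho (hyp (k, -1)) g_target)%:E)%E).
  by apply: leeB.
rewrite -EFinB lee_fin !rhoE.
have H := @leb2_w_le R k w (eps / 4) k0.
have : fine (leb2 (Dset w)) <= fine (leb2 (Dset (k, -1))) + eps.
  rewrite -lee_fin EFinD !fineK; try exact: Dfin.
  apply: le_trans; first apply: H.
  - lra.
  - lra.
  - have -> : eps / 4 = (k + 1) * eta by rewrite /eta; field; lra.
    nra.
  apply: leeD2l; rewrite lee_fin; have -> : eps / 4 *+ 4 = eps by rewrite -mulr_natr; field.
  done.
move=> hw.
have fD0 := lt_le_trans ltr01 fd1.
rewrite -mulrBl ler_pdivrMr //.
apply: (@le_trans _ _ eps).
  by rewrite ?lerBlDl ?lerBlDr // addrC.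
by rewrite -{1}(mulr1 eps); apply: ler_wpM2l => //; exact: ltW.
Qed.



Lemma normal_itv_fin (R : realType) (m s c d : R) :
  normal_prob m s (`[c, d]%classic : set R) \is a fin_num /\
  (fine (normal_prob m s (`[c, d]%classic : set R)) <= 1).
Proof.
have h1 : (normal_prob m s (`[c, d]%classic : set R) <= 1)%E.
  by apply: probability_le1; exact: measurable_itv.
have h0 : (0 <= normal_prob m s (`[c, d]%classic : set R))%E by exact: measure_ge0.
have fin : normal_prob m s (`[c, d]%classic : set R) \is a fin_num.
  by rewrite ge0_fin_numE // (le_lt_trans h1) // ltry.
by split => //; rewrite -lee_fin fineK.
Qed.

Lemma beta_bound (R : realType) (p : R) : 0 < p -> p <= 1 ->
  exists C : R, exists N0 : nat, forall N : nat, (N0 <= N)%N ->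
    `|(1 - p) ^+ N| <= C * expR (- Num.sqrt (N%:R)).
Proof.
move=> p0 p1; exists 1, (Num.trunc (p ^-2)).+1 => N hN.
rewrite mul1r ger0_norm; last by apply: exprn_ge0; lra.
apply: (@le_trans _ _ (expR (- p) ^+ N)).
  apply: lerXn2r; rewrite ?nnegrE; try lra; first exact: expR_ge0.
  by have := expR_ge1Dx (- p); lra.
rewrite -expRM_natl ler_expR.
set q := Num.sqrt (N%:R : R).
have q0 : 0 <= q by exact: sqrtr_ge0.
have qq : q ^+ 2 = N%:R by rewrite sqr_sqrtr // ler0n.
have hN' : p ^-2 < N%:R.
  apply: (lt_le_trans (truncnS_gt _)); rewrite ler_nat; exact: hN.
have pN : 1 < p ^+ 2 * N%:R.
  rewrite -(@ltr_pM2l _ (p ^-2)) ?invr_gt0 ?exprn_gt0 // mulr1 mulrA mulVf ?mul1r //.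
  by rewrite expf_neq0 // gt_eqF.
have pq : 1 <= p * q.
  have e : (p * q) ^+ 2 = p ^+ 2 * N%:R by rewrite exprMn qq.
  have z0 : 0 <= p * q by rewrite mulr_ge0 // ltW.
  move: e z0; set z := p * q => e z0.
  rewrite -e in pN; nra.
rewrite -qq; nra.
Qed.

Theorem proposition3 (R : realType) (x0 : R * R) (theta0 eps sigma B : R) :
  x0 != 0 -> norm2 x0 <= 1 ->
  x0 = (norm2 x0 * cos theta0, norm2 x0 * sin theta0) ->
  0 < theta0 < pi / 2 ->
  0 < eps < 1 -> theta0 + pi * eps < pi / 2 ->
  0 < sigma -> 0 < B ->
  exists (alpha beta : nat -> R),
    (exists C : R, exists N0 : nat, forall N : nat, (N0 <= N)%N ->
        `|alpha N| <= C / Num.sqrt (N%:R)) /\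
    (exists C : R, exists N0 : nat, forall N : nat, (N0 <= N)%N ->
        `|beta N| <= C * expR (- Num.sqrt (N%:R))) /\
    forall (N : nat) (d : measure_display) (T : measurableType d)
           (P : probability T R) (W : 'I_N -> T -> R * R),
      iid_law P W (gauss2 (1, 0) sigma) ->
      exists E : set T, measurable E /\
        E `<=` [set t | (inf_min_dist x0 eps (fun i => W i t)
                          <= (alpha N / B)%:E)%E] /\
        ((1 - beta N)%:E <= P E)%E.
Proof.
move=> x0n0 _ x0E /andP [th0 th1] /andP [e0 _] _ sig0 B0.
set r := norm2 x0.
have pi0 := pi_gt0 R.
have c0 : 0 < cos theta0 by apply: cos_gt0_pihalf; apply/andP; split; lra.
have s0 : 0 <= sin theta0 by apply: sin_ge0_pi; apply/andP; split; lra.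
have ha : x0.1 = r * cos theta0 by rewrite {1}x0E.
have hb : x0.2 = r * sin theta0 by rewrite {1}x0E.
have r0 : 0 < r.
  rewrite lt_neqAle sqrtr_ge0 andbT; apply/eqP => rz.
  rewrite -rz !mul0r in ha hb.
  have e : x0 = 0 by rewrite [x0]surjective_pairing ha hb.
  by rewrite e eqxx in x0n0.
have a0 : 0 < x0.1 by rewrite ha mulr_gt0.
have b0 : 0 <= x0.2 by rewrite hb mulr_ge0 // ltW.
have /= G := @geo_main R x0 eps a0 b0 e0.
set k := x0.2 / x0.1.
set eta := eps / (4 * (k + 1)).
have k0 : 0 <= k by rewrite /k divr_ge0 // ltW.
have eta0 : 0 < eta by rewrite /eta divr_gt0 // mulr_gt0 //; lra.
set S := (`[k - eta, k]%classic : set R) `*` (`[-1 - eta, -1]%classic : set R).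
have mS : measurable S by apply: measurableX; exact: measurable_itv.
have [fin1 le1] := @normal_itv_fin R 1 sigma (k - eta) k.
have [fin2 le2] := @normal_itv_fin R 0 sigma (-1 - eta) (-1).
set p1 := fine (normal_prob 1 sigma (`[k - eta, k]%classic : set R)).
set p2 := fine (normal_prob 0 sigma (`[-1 - eta, -1]%classic : set R)).
have p10 : 0 < p1.
  rewrite -lte_fin fineK //; apply: normal_itv_gt0; [by rewrite gt_eqF | lra].
have p20 : 0 < p2.
  rewrite -lte_fin fineK //; apply: normal_itv_gt0; [by rewrite gt_eqF | lra].
have pS : gauss2 (1, 0) sigma S = (p1 * p2)%:E.
  rewrite /gauss2 /S product_measure1E /=; try exact: measurable_itv.
  by rewrite EFinM /p1 /p2 !fineK.
set p := p1 * p2.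
have p0 : 0 < p by rewrite mulr_gt0.
have p1' : p <= 1.
  by rewrite /p -(mulr1 1); apply: ler_pM => //; exact: ltW.
exists (fun _ => 0), (fun N => (1 - p) ^+ N).
split; first by exists 0, 0%N => N _; rewrite normr0 mul0r.
split; first exact: beta_bound.
move=> N d T P W [mW [lawW indW]].
have mWS i : measurable (W i @^-1` S).
  by rewrite -[X in measurable X]setTI; exact: (mW i).
set E := ~` (\bigcap_(i in [set: 'I_N]) (W i @^-1` ~` S)).
have mI : measurable (\bigcap_(i in [set: 'I_N]) (W i @^-1` ~` S)).
  apply: fin_bigcap_measurable; first exact: finite_finset.
  by move=> i _; rewrite -preimage_setC; exact: measurableC.
exists E; split; first exact: measurableC.
split.
  move=> t /= Ht.
  have [i Si] : exists i, S (W i t).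
    apply: contrapT => nS; apply: Ht => i _ /= Si; apply: nS; by exists i.
  have [Hi Li] := G _ Si.
  rewrite mul0r; apply: ge_ereal_inf.
  exists (min_dist x0 (fun i => W i t) (W i t)).
    by exists (W i t).
  rewrite /min_dist.
  rewrite (bigD1 i) //= ge_min; apply/orP; left.
  by rewrite subrr /norm2 /= expr0n /= addr0 sqrtr0.
rewrite probability_setC // indW; last by move=> i; exact: measurableC.
have -> : (\prod_(i < N) P (W i @^-1` ~` S) = \prod_(i < N) (1 - p)%:E)%E.
  apply: eq_bigr => i _; rewrite -preimage_setC probability_setC // lawW // pS.
  by rewrite -EFinB.
by rewrite prodEFin prod_const_ord -EFinB.
Qed.
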